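(* Let $G$ be a graph and $k \ge \gamma(G)$ an integer. If $D_{k+1}(G)$ is connected, then $X_k(G)$ is connected.
   Context: All graphs are finite and simple. A set $S \subseteq V(G)$ is a dominating set of $G$ if every vertex of $V(G)\setminus S$ is adjacent to a vertex of $S$. $\gamma(G)$ is the minimum cardinality of a dominating set of $G$. For an integer $k \ge \gamma(G)$, the $k$-dominating graph $D_k(G)$ is the graph whose vertices are the dominating sets of $G$ of cardinality at most $k$, with two such sets $A,B$ adjacent if and only if their symmetric difference $(A\setminus B)\cup(B\setminus A)$ consists of exactly one vertex of $G$. $X_k(G)$ is the graph whose vertices are the dominating sets of $G$ of cardinality exactly $k$, with two such sets $S,T$ adjacent if and only if there exist $s \in S$ and $t \in T$ with $T = (S\setminus\{s\})\cup\{t\}$ (and $S \neq T$). *)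

(* Defs.v *)
(* A finite simple graph is a symmetric irreflexive relation
   e : rel T on a finite vertex type T. *)
From mathcomp Require Import all_boot.
Set Implicit Arguments. Unset Strict Implicit. Unset Printing Implicit Defensive.

Section Dom.
Variable T : finType.
Variable e : rel T.

Definition dominating (S : {set T}) : bool :=
  [forall v, (v \notin S) ==> [exists u in S, e u v]].

(* gamma(G): the minimum cardinality of a dominating set
   ([set: T] is always dominating, so the arg min is well defined). *)
Definition domination_number : nat :=
  #|[arg min_(S < [set: T] | dominating S) #|S|]|.

Definition Dk_vertex (k : nat) (A : {set T}) : bool :=
  dominating A && (#|A| <= k).

Definition Dk_adj (k : nat) (A B : {set T}) : bool :=
  [&& Dk_vertex k A, Dk_vertex k B & #|(A :\: B) :|: (B :\: A)| == 1].

Definition Xk_vertex (k : nat) (A : {set T}) : bool :=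
  dominating A && (#|A| == k).

Definition Xk_adj (k : nat) (S S' : {set T}) : bool :=
  [&& Xk_vertex k S, Xk_vertex k S', S != S' &
      [exists s in S, exists t in S', S' == (S :\ s) :|: [set t]]].

Definition graph_connected (U : finType) (vert : pred U) (adj : rel U) : Prop :=
  forall A B, vert A -> vert B -> connect adj A B.

End Dom.

(* Main.v *)
Require Import Defs.
From mathcomp Require Import all_boot.
Set Implicit Arguments. Unset Strict Implicit. Unset Printing Implicit Defensive.

Section Proof.
Variable T : finType.
Variable e : rel T.
Variable k : nat.
Variable S : {set T}.

Lemma dom_sup (A C : {set T}) : dominating e A -> A \subset C -> dominating e C.
Proof.
move=> /forallP dA sAC; apply/forallP => v; apply/implyP => vC.
have vA : v \notin A by apply: contra vC; apply: (subsetP sAC).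
have /existsP [u /andP [uA euv]] := implyP (dA v) vA.
by apply/existsP; exists u; rewrite (subsetP sAC).
Qed.

Definition Good (A : {set T}) : Prop :=
  forall B, Xk_vertex e k B -> (A \subset B) || (B \subset A) -> connect (Xk_adj e k) S B.

Lemma good_step A A' : Dk_adj e k.+1 A A' -> Good A -> Good A'.
Proof.
case/and3P => /andP [dA cA] /andP [dA' cA'] /cards1P [x Dx] GA.
have Hv : forall v, ((v \in A) && (v \notin A')) || ((v \in A') && (v \notin A)) = (v == x).
  move=> v; have : v \in [set x] = (v == x) by rewrite inE.
  by rewrite -Dx !inE => <-; case: (v \in A); case: (v \in A').
have Hx := Hv x; rewrite eqxx in Hx.
have Ho : forall v, v != x -> (v \in A') = (v \in A).
  by move=> v /negbTE vx; have := Hv v; rewrite vx; case: (v \in A); case: (v \in A').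
case/orP: Hx => /andP [xA xA'].
-
  have EA : A' = A :\ x.
    apply/setP => v; rewrite !inE; case: (eqVneq v x) => [->|vx] /=.
      by rewrite (negbTE xA').
    by rewrite Ho.
  subst A'.
  move=> B XB /orP [sAB|sBA]; last first.
    by apply: GA => //; rewrite (subset_trans sBA (subD1set _ _)) orbT.
  case sBA: (B \subset A); first by apply: GA => //; rewrite sBA orbT.
  case xB: (x \in B).
    apply: GA => //; apply/orP; left; apply/subsetP => v vA.
    case: (eqVneq v x) => [->//|vx]; apply: (subsetP sAB); by rewrite !inE vx.
  have /subsetPn [z zB zA] : ~~ (B \subset A) by rewrite sBA.
  set C := x |: (B :\ z).
  have zx : z != x by apply: contraNneq zA => ->.
  have cC : #|C| = k.
    case/andP: XB => _ /eqP <-.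
    rewrite cardsU1 !inE xB andbF /= (cardsD1 z B) zB //.
  have sAC : A \subset C.
    apply/subsetP => v vA; rewrite !inE; case: (eqVneq v x) => //= vx.
    have vz : v != z by apply: contraNneq zA => <-.
    by rewrite vz (subsetP sAB) // !inE vx.
  have XC : Xk_vertex e k C by rewrite /Xk_vertex (dom_sup dA sAC) cC eqxx.
  apply: connect_trans (GA C XC _) _; first by rewrite sAC.
  apply: connect1; rewrite /Xk_adj XC XB /=.
  apply/andP; split.
    apply/negP => /eqP CB; have : x \in C by rewrite !inE eqxx.
    by rewrite CB xB.
  apply/existsP; exists x; apply/andP; split; first by rewrite !inE eqxx.
  apply/existsP; exists z; rewrite zB /=; apply/eqP/setP => v; rewrite !inE.
  case: (eqVneq v z) => [->|vz]; first by rewrite zB orbT.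
  case: (eqVneq v x) => [->|vx] /=; first by rewrite xB.
  by rewrite orbF.
-
  move: xA xA' => xA' xA.
  have EA : A' = x |: A.
    apply/setP => v; rewrite !inE; case: (eqVneq v x) => [->|vx] /=; first by [].
    by rewrite Ho.
  subst A'.
  move=> B XB /orP [sAB|sBA].
    by apply: GA => //; rewrite (subset_trans (subsetUr _ _) sAB).
  case sBA': (B \subset A); first by apply: GA => //; rewrite sBA' orbT.
  case sAB: (A \subset B); first by apply: GA => //; rewrite sAB.
  have /subsetPn [z zA zB] : ~~ (A \subset B) by rewrite sAB.
  have zx : z != x by apply: contraNneq xA => <-.
  have xB : x \in B.
    have /subsetPn [w wB wA] : ~~ (B \subset A) by rewrite sBA'.
    have := subsetP sBA w wB; rewrite !inE (negbTE wA) orbF => /eqP wx.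
    by rewrite -wx.
  set C := (x |: A) :\ z.
  have sBC : B \subset C.
    apply/subsetP => v vB; have := subsetP sBA v vB; rewrite !inE => ->.
    by rewrite andbT; apply: contraNneq zB => <-.
  have cxA : #|x |: A| = #|A|.+1 by rewrite cardsU1 xA.
  have cCA : #|C| = #|A|.
    have := cardsD1 z (x |: A); rewrite !inE zA orbT cxA add1n => -[].
    by rewrite /C => <-.
  case/andP: (XB) => _ /eqP cB.
  have cAk : #|A| = k.
    apply/eqP; rewrite eqn_leq -ltnS -cxA cA' -cB -cCA.
    by rewrite subset_leq_card.
  have BC : B = C.
    by apply/eqP; rewrite eqEcard sBC cCA cAk cB leqnn.
  have XA : Xk_vertex e k A by rewrite /Xk_vertex dA cAk eqxx.
  apply: connect_trans (GA A XA _) _; first by rewrite subxx.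
  apply: connect1; rewrite /Xk_adj XA XB /=.
  apply/andP; split.
    by apply/negP => /eqP AB; move: zB; rewrite -AB zA.
  apply/existsP; exists z; rewrite zA /=.
  apply/existsP; exists x; rewrite xB /= BC; apply/eqP/setP => v; rewrite !inE.
  case: (eqVneq v z) => [->|vz] /=; first by rewrite (negbTE zx).
  case: (eqVneq v x) => [->|vx] /=; by rewrite ?orbT ?orbF.
Qed.

Lemma good_path p A : path (Dk_adj e k.+1) A p -> Good A -> Good (last A p).
Proof.
elim: p A => [|a p IH] A //= /andP [hA hp] GA.
by apply: IH hp (good_step hA GA).
Qed.

End Proof.

Theorem theorem12 (T : finType) (e : rel T)
  (e_sym : symmetric e) (e_irr : irreflexive e) (k : nat) :
  domination_number e <= k ->
  graph_connected (Dk_vertex e k.+1) (Dk_adj e k.+1) ->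
  graph_connected (Xk_vertex e k) (Xk_adj e k).
Proof.
move=> _ HD S S' XS XS'.
have DS : forall A, Xk_vertex e k A -> Dk_vertex e k.+1 A.
  by move=> A /andP [d /eqP c]; rewrite /Dk_vertex d c leqnSn.
have /connectP [p hp eS'] := HD S S' (DS _ XS) (DS _ XS').
have GS : Good e k S S.
  move=> B XB sub.
  case/andP: XS => _ /eqP cS; case/andP: XB => _ /eqP cB.
  have -> : B = S.
    case/orP: sub => s; apply/eqP.
      by rewrite eq_sym eqEcard s cS cB leqnn.
    by rewrite eqEcard s cS cB leqnn.
  exact: connect0.
rewrite eS'; apply: (good_path hp GS); first by rewrite -eS'.
by rewrite subxx.
Qed.
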